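(* Let $r\geq 2$. Then $Z_{+}(K_r\,\square\, K_r)=M_{+}(K_r\,\square\, K_r)=(r-1)^2+1$.
   Context: $K_r$ is the complete graph on $r$ vertices. The Cartesian product $G\,\square\, G'$ has vertex set $V(G)\times V(G')$, with $(g,g')$ adjacent to $(h,h')$ if and only if either $g=h$ and $\{g',h'\}\in E(G')$, or $g'=h'$ and $\{g,h\}\in E(G)$. The positive semidefinite zero forcing number $Z_{+}(G)$ is the minimum size of a set $S\subseteq V(G)$ such that, coloring $S$ blue and all other vertices white, repeated application of the following rule makes all vertices blue: a white vertex $v$ becomes blue if it is a neighbor of a blue vertex $u$ and no other white neighbor of $u$ is connected to $v$ by a path all of whose vertices are white. $M_{+}(G)$ is the maximum nullity over all real symmetric positive semidefinite $n\times n$ matrices $B=[b_{ij}]$ such that for $i\neq j$, $b_{ij}\neq 0$ if and only if $\{i,j\}$ is an edge of $G$ (diagonal entries unrestricted). *)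

(* Defs.v *)
From HB Require Import structures.
From mathcomp Require Import all_boot all_order all_algebra.
From mathcomp Require Import boolp reals.
Set Implicit Arguments. Unset Strict Implicit. Unset Printing Implicit Defensive.
Import Order.TTheory GRing.Theory Num.Theory.

(* A simple graph on a finite vertex type T is given by a symmetric,
   irreflexive adjacency relation e : rel T. *)

Definition complete_graph (r : nat) : rel 'I_r := fun x y => x != y.

Definition cart_prod (T1 T2 : finType) (e1 : rel T1) (e2 : rel T2)
  : rel (T1 * T2) :=
  fun p q => ((p.1 == q.1) && e2 p.2 q.2) || ((p.2 == q.2) && e1 p.1 q.1).

Section PSDForcing.
Variables (T : finType) (e : rel T).

(* adjacency restricted to white (non-blue) vertices, B = current blue set *)
Definition white_rel (B : {set T}) : rel T :=
  fun x y => [&& e x y, x \notin B & y \notin B].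

Definition can_force (B : {set T}) (u v : T) : bool :=
  [&& u \in B, e u v, v \notin B &
      [forall w, [&& w \notin B, e u w & w != v] ==>
                 ~~ connect (white_rel B) w v]].

Inductive derives (S : {set T}) : {set T} -> Prop :=
| derives_refl : derives S S
| derives_step B u v : derives S B -> can_force B u v -> derives S (v |: B).

Definition psd_forcing_set (S : {set T}) : Prop := derives S [set: T].

(* Z_+(G): minimum size of a PSD forcing set (setT is always one). *)
Definition Zplus : nat :=
  \big[minn/#|T|]_(S : {set T} | `[< psd_forcing_set S >]) #|S|.

(* M_+(G): maximum nullity of a real symmetric PSD matrix with pattern G;
   matrices are indexed by 'I_#|T| via the enumeration enum_val of T. *)
Definition psd_pattern_matrix (R : realType) (B : 'M[R]_#|T|) : Prop :=
  [/\ trmx B = B,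
      (forall x : 'cV[R]_#|T|, 0 <= (trmx x *m B *m x) 0 0)%R &
      (forall i j : 'I_#|T|, i != j ->
         (B i j != 0)%R = e (enum_val i) (enum_val j))].

Definition nullity (R : realType) (B : 'M[R]_#|T|) : nat := #|T| - \rank B.

Definition Mplus (R : realType) : nat :=
  \max_(k < #|T|.+1 |
        `[< exists B : 'M[R]_#|T|, psd_pattern_matrix B /\ nullity B = k >]) k.

End PSDForcing.

Arguments complete_graph : clear implicits.
Definition KrKr (r : nat) : rel ('I_r * 'I_r) :=
  cart_prod (complete_graph r) (complete_graph r).
Arguments KrKr : clear implicits.

(* Main.v *)
Require Import Defs.
From mathcomp Require Import all_boot all_order all_algebra.
From mathcomp Require Import boolp reals.
Import Order.TTheory GRing.Theory Num.Theory.
Open Scope ring_scope.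
Set Implicit Arguments. Unset Strict Implicit. Unset Printing Implicit Defensive.
From mathcomp Require Import zify ring lra.
Lemma quad0 (R : realType) (a c : R) : 0 <= c -> (forall t, 0 <= 2 * t * a + t^+2 * c) -> a = 0.
Proof. move=> hc h.
pose s := (c + 1)^-1.
have hs : 0 < s by rewrite invr_gt0; lra.
have hsc : s * (c + 1) = 1 by rewrite mulVf //; apply/eqP => /eqP; lra.
have := h (-a * s).
have -> : 2 * (- a * s) * a + (- a * s) ^+ 2 * c = - (a^+2 * (s * (1 + s))).
  have -> : c = s^-1 - 1 by rewrite invrK; ring.
  field. apply/eqP => h0; move: hs; rewrite h0; lra.
rewrite oppr_ge0 => h2.
have h3 : 0 < s * (1 + s) by apply: mulr_gt0 => //; lra.
have : a ^+ 2 <= 0.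
  by rewrite -(pmulr_lle0 _ h3).
rewrite le_eqVlt ltNge sqr_ge0 orbF sqrf_eq0 => /eqP //.
Qed.

Lemma connect_inv (T : finType) (f : rel T) (P : pred T) :
  (forall x y, f x y -> P x -> P y) -> forall x y, connect f x y -> P x -> P y.
Proof.
move=> H x y /connectP [p]; elim: p x => [|z p IH] x /=; first by move=> _ ->.
by case/andP=> fxz pz ly Px; apply: (IH z pz ly (H _ _ fxz Px)).
Qed.

Section General.
Variables (R : realType) (T : finType) (e : rel T).
Hypothesis esym : symmetric e.
Local Notation N := #|T|.

Lemma psd_row (B : 'M[R]_N) : psd_pattern_matrix e B ->
  forall x : 'rV_N, 0 <= (x *m B *m x^T) 0 0.
Proof. by case=> _ H _ x; have := H x^T; rewrite trmxK. Qed.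

Lemma qf_sym (B : 'M[R]_N) (x y : 'rV_N) : B^T = B ->
  (x *m B *m y^T) 0 0 = (y *m B *m x^T) 0 0.
Proof.
move=> hB.
have -> : x *m B *m y^T = (y *m B *m x^T)^T by rewrite !trmx_mul trmxK hB mulmxA.
by rewrite mxE.
Qed.

Lemma psd_ker (B : 'M[R]_N) (y : 'rV_N) : psd_pattern_matrix e B ->
  (y *m B *m y^T) 0 0 = 0 -> y *m B = 0.
Proof.
move=> hP hy; have [hs _ _] := hP.
apply/rowP => j; rewrite [RHS]mxE.
pose d : 'rV[R]_N := delta_mx 0 j.
have hc : 0 <= (d *m B *m d^T) 0 0 by apply: psd_row.
have key : forall t : R, 0 <= 2 * t * (y *m B *m d^T) 0 0 + t^+2 * (d *m B *m d^T) 0 0.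
  move=> t; rewrite !mxE; move: t.
  move=> t; have := psd_row hP (y + t *: d).
  rewrite linearD /= linearZ /= !mulmxDl !mulmxDr -!scalemxAl -!scalemxAr.
  have hsym := qf_sym d y hs; have hy' := hy.
  rewrite !mxE in hsym hy' *; rewrite hy' hsym.
  by congr (0 <= _); ring.
have := quad0 hc key.
suff -> : (y *m B *m d^T) 0 0 = (y *m B) 0 j by [].
rewrite mxE (bigD1 j) //= big1 ?addr0; first by rewrite !mxE !eqxx mulr1.
by move=> k /negbTE kj; rewrite !mxE kj andbF mulr0.
Qed.

Lemma white_sym (Bs : {set T}) : symmetric (white_rel e Bs).
Proof. by move=> x y; rewrite /white_rel esym; case: (x \in Bs); case: (y \in Bs); rewrite /= ?andbF. Qed.

Lemma force_step (B : 'M[R]_N) (x : 'rV_N) (Bs : {set T}) u v :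
  psd_pattern_matrix e B -> x *m B = 0 ->
  (forall i, enum_val i \in Bs -> x 0 i = 0) ->
  can_force e Bs u v -> x 0 (enum_rank v) = 0.
Proof.
move=> hP hx hz /and4P[uB euv vB /forallP hw].
have [hs _ hpat] := hP.
pose C := [set i : 'I_N | connect (white_rel e Bs) v (enum_val i)].
pose y : 'rV[R]_N := \row_i (if i \in C then x 0 i else 0).
pose z := x - y.
have Cwhite : forall i, i \in C -> enum_val i \notin Bs.
  move=> i; rewrite inE => hc.
  apply: (connect_inv (P := fun t => t \notin Bs) _ hc vB).
  by move=> a b /and3P[].
have zBy : (z *m B *m y^T) 0 0 = 0.
  rewrite mxE big1 // => j _; rewrite !mxE.
  case: ifP => jC; last by rewrite mulr0.
  rewrite big_distrl big1 // => i _ /=.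
  rewrite !mxE; case: ifP => iC; first by rewrite subrr !mul0r.
  case: (boolP (enum_val i \in Bs)) => iB; first by rewrite hz // subr0 !mul0r.
  have ij : i != j by apply: contraFN iC => /eqP ->.
  case: (eqVneq (B i j) 0) => [->|Bij]; first by rewrite mulr0 mul0r.
  move: Bij; rewrite hpat // => eij.
  have jw := Cwhite j jC.
  have : i \in C.
    move: jC; rewrite !inE => cj; apply: connect_trans cj _; apply: connect1.
    by rewrite /white_rel esym eij iB jw.
  by rewrite iC.
have yBy : (y *m B *m y^T) 0 0 = 0.
  have yE : y = x - z by rewrite /z opprB addrCA subrr addr0.
  by rewrite {1}yE mulmxBl hx sub0r mulNmx mxE zBy oppr0.
have yB0 := psd_ker hP yBy.
have vC : enum_rank v \in C by rewrite inE enum_rankK connect0.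
have : (y *m B) 0 (enum_rank u) = 0 by rewrite yB0 mxE.
rewrite mxE (bigD1 (enum_rank v)) //= big1 ?addr0; last first.
  move=> i iv; rewrite !mxE; case: ifP => iC; last by rewrite mul0r.
  have iu : i != enum_rank u.
    by apply: contraNneq (Cwhite _ iC) => ->; rewrite enum_rankK.
  case: (eqVneq (B i (enum_rank u)) 0) => [->|Biu]; first by rewrite mulr0.
  move: Biu; rewrite hpat // enum_rankK esym => eui.
  have := hw (enum_val i); rewrite Cwhite // eui /=.
  have -> : (enum_val i != v) by apply: contraNneq iv => <-; rewrite enum_valK.
  move: iC; rewrite inE => cvi.
  by rewrite /= (sym_connect_sym (@white_sym Bs)) cvi.
rewrite !mxE vC => /eqP; rewrite mulf_eq0 => /orP[/eqP //|].
have vu : enum_rank v != enum_rank u.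
  by apply: contraNneq vB => /enum_rank_inj ->.
have := hpat _ _ vu; rewrite !enum_rankK esym euv => h /eqP h0; by rewrite h0 eqxx in h.
Qed.

Lemma derives_zero (B : 'M[R]_N) (x : 'rV_N) (S Bs : {set T}) :
  psd_pattern_matrix e B -> x *m B = 0 ->
  (forall i, enum_val i \in S -> x 0 i = 0) ->
  derives e S Bs -> forall i, enum_val i \in Bs -> x 0 i = 0.
Proof.
move=> hP hx hS; elim => [//|Bs' u v _ IH hf] i.
rewrite in_setU1 => /orP[/eqP hi|]; last exact: IH.
have -> : i = enum_rank v by rewrite -hi enum_valK.
exact: force_step hP hx IH hf.
Qed.

Lemma nullity_le (B : 'M[R]_N) (S : {set T}) :
  psd_pattern_matrix e B -> psd_forcing_set e S -> (nullity B <= #|S|)%N.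
Proof.
move=> hP hF; rewrite leqNgt; apply/negP => hlt.
pose P : 'M[R]_(N, #|S|) :=
  \matrix_(i, k) (i == enum_rank (@enum_val T (mem S) k))%:R.
pose M := row_mx B P.
have rM : (\rank M <= \rank B + #|S|)%N.
  rewrite -mxrank_tr /M tr_row_mx -addsmxE.
  apply: leq_trans (mxrank_adds_leqif _ _).1 _.
  by rewrite !mxrank_tr leq_add2l rank_leq_col.
have rB : (\rank B <= N)%N by apply: rank_leq_row.
have : kermx M != 0.
  rewrite -mxrank_eq0 mxrank_ker; move: hlt; rewrite /nullity; lia.
move=> hK.
have [i hi] : exists i, row i (kermx M) != 0.
  case: (pickP (fun i => row i (kermx M) != 0)) => [i hi|h]; first by exists i.
  move: hK; rewrite (_ : kermx M = 0) ?eqxx //.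
  by apply/row_matrixP => i; rewrite row0; apply/eqP; move/negbT: (h i); rewrite negbK.
pose x := row i (kermx M).
have hxM : x *m M = 0 by rewrite /x -row_mul mulmx_ker row0.
move: hxM; rewrite /M mul_mx_row -(row_mx0 _ 1 N #|S|) => /eq_row_mx [xB xP].
have hS : forall i0, enum_val i0 \in S -> x 0 i0 = 0.
  move=> i0 hi0.
  pose k := enum_rank_in hi0 (enum_val i0).
  have : (x *m P) 0 k = 0 by rewrite xP mxE.
  rewrite mxE (bigD1 i0) //= big1 ?addr0.
    by rewrite !mxE /k enum_rankK_in // enum_valK eqxx mulr1.
  move=> j ji0; rewrite !mxE /k enum_rankK_in // enum_valK.
  by rewrite (negbTE ji0) mulr0.
have hall := derives_zero hP xB hS hF.
move: hi; rewrite -/x (_ : x = 0) ?eqxx //.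
by apply/rowP => j; rewrite [RHS]mxE hall // inE.
Qed.
End General.

Section Kr.
Variable n : nat.
Local Notation r := n.+2.
Local Notation V := ('I_r * 'I_r)%type.
Definition one : 'I_r := lift ord0 ord0.
Lemma one_neq0 : (one == ord0) = false.
Proof. by rewrite /one eq_sym (negbTE (neq_lift _ _)). Qed.

Definition S0 : {set V} := (ord0, ord0) |: setX [set~ ord0] [set~ ord0].

Lemma card_S0 : #|S0| = (n.+1 ^ 2 + 1)%N.
Proof.
rewrite cardsU1 cardsX cardsC1 card_ord /= !inE eqxx /=.
by rewrite addnC expnS expn1.
Qed.

Lemma notS0 (x : V) : (x \notin S0) = ((x.1 == ord0) != (x.2 == ord0)).
Proof.
case: x => x1 x2; rewrite !inE /= xpair_eqE.
by case: (x1 == ord0); case: (x2 == ord0).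
Qed.

Lemma white1 (x : V) : x \notin S0 -> (x.1 == ord0) = ~~ (x.2 == ord0).
Proof. by rewrite notS0; case: (x.1 == ord0); case: (x.2 == ord0). Qed.

Lemma KrKr_sym : symmetric (KrKr r).
Proof.
move=> x y; rewrite /KrKr /cart_prod /complete_graph.
by rewrite /= [y.1 == x.1]eq_sym [y.2 == x.2]eq_sym.
Qed.

Lemma white_inv (Bs : {set V}) : S0 \subset Bs ->
  forall x y, white_rel (KrKr r) Bs x y -> (x.1 == ord0) = (y.1 == ord0).
Proof.
move=> sub x y /and3P[exy xB yB].
have xw : x \notin S0 by apply: contra xB; apply: (subsetP sub).
have yw : y \notin S0 by apply: contra yB; apply: (subsetP sub).
move: exy; rewrite /KrKr /cart_prod /complete_graph.
case/orP => /andP[/eqP h _]; first by rewrite h.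
by rewrite (white1 xw) (white1 yw) h.
Qed.

Lemma not_conn (Bs : {set V}) w v : S0 \subset Bs ->
  (w.1 == ord0) != (v.1 == ord0) -> ~~ connect (white_rel (KrKr r) Bs) w v.
Proof.
move=> sub hne; apply/negP => hc.
have hP : forall a b, white_rel (KrKr r) Bs a b ->
    (a.1 == ord0) == (w.1 == ord0) -> (b.1 == ord0) == (w.1 == ord0).
  by move=> a b /(white_inv sub) <-.
have := connect_inv hP hc; rewrite eqxx => /(_ isT).
by rewrite eq_sym (negbTE hne).
Qed.

Lemma force_exists (Bs : {set V}) v : S0 \subset Bs -> v \notin Bs ->
  exists u, can_force (KrKr r) Bs u v.
Proof.
move=> sub vB.
have vw : v \notin S0 by apply: contra vB; apply: (subsetP sub).
have hv := white1 vw.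
case: v vB vw hv => a b vB vw /= hv.
have [a0|a0] := eqVneq a ord0.
  have b0 : b != ord0 by move: hv; rewrite a0 eqxx; case: (b == ord0).
  exists (one, b); apply/and4P; split => //.
  - by apply: (subsetP sub); rewrite !inE /= ?one_neq0 ?b0 ?orbT.
  - by rewrite /KrKr /cart_prod /complete_graph /= ?eqxx a0 one_neq0.
  apply/forallP => w; apply/implyP => /and3P[wB euw wv].
  have ww : w \notin S0 by apply: contra wB; apply: (subsetP sub).
  apply: not_conn => //=.
  move: euw; rewrite /KrKr /cart_prod /complete_graph /=.
  case/orP => /andP[/eqP h1 h2]; first by rewrite -h1 one_neq0 a0 eqxx.
  exfalso; move: wv; case: w wB ww h1 h2 => w1 w2 wB ww /= h1 h2.
  have w10 : w1 = ord0.
    by apply/eqP; rewrite (white1 ww) /= -h1 (negbTE b0).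
  by rewrite w10 -h1 a0 eqxx.
have b0 : b = ord0 by apply/eqP; move: hv; rewrite (negbTE a0); case: (b == ord0).
exists (a, one); apply/and4P; split => //.
- by apply: (subsetP sub); rewrite !inE /= ?one_neq0 ?a0 ?orbT.
- by rewrite /KrKr /cart_prod /complete_graph /= ?eqxx b0 one_neq0.
apply/forallP => w; apply/implyP => /and3P[wB euw wv].
have ww : w \notin S0 by apply: contra wB; apply: (subsetP sub).
apply: not_conn => //=.
move: euw; rewrite /KrKr /cart_prod /complete_graph /=.
case/orP => /andP[/eqP h1 h2].
  exfalso; move: wv; case: w wB ww h1 h2 => w1 w2 wB ww /= h1 h2.
  have w20 : w2 = ord0.
    by apply/eqP; move: (white1 ww); rewrite /= -h1 (negbTE a0); case: (w2 == ord0).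
  by rewrite w20 -h1 b0 eqxx.
have w10 : w.1 = ord0 by apply/eqP; rewrite (white1 ww) -h1 one_neq0.
by rewrite w10 eqxx (negbTE a0).
Qed.

Lemma S0_forcing : psd_forcing_set (KrKr r) S0.
Proof.
suff H : forall k (Bs : {set V}), (#|~: Bs| <= k)%N -> S0 \subset Bs ->
    derives (KrKr r) S0 Bs -> derives (KrKr r) S0 setT.
  by apply: (H _ S0 (leqnn _)) => //; constructor.
elim => [|k IH] Bs hk sub hd.
  have h0 : ~: Bs = set0 by apply/eqP; rewrite -cards_eq0 -leqn0.
  by rewrite -setC0 -h0 setCK.
case: (pickP (fun v => v \notin Bs)) => [v vB|h]; last first.
  have eB : Bs = setT by apply/setP => x; rewrite inE; move/negbT: (h x); rewrite negbK.
  by rewrite -eB.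
have [u hf] := force_exists sub vB.
apply: (IH (v |: Bs)).
- have : ~: (v |: Bs) = (~: Bs) :\ v by apply/setP => x; rewrite !inE; case: eqP.
  move=> ->; move: hk; rewrite (cardsD1 v (~: Bs)) inE vB /= add1n ltnS.
  by [].
- by apply: subset_trans sub (subsetUr _ _).
- exact: derives_step hd hf.
Qed.

End Kr.

Section Mat.
Variables (R : realType) (n : nat).
Local Notation r := n.+2.
Local Notation V := ('I_r * 'I_r)%type.

Definition dlt (i : 'I_r) (k : 'I_n.+1) : R := (i == lift ord0 k)%:R.
Definition al (u : V) : R := ((u.1 == ord0) || (u.2 == ord0))%:R.
Definition ga (u : V) : R := if u.1 == ord0 then 2 * n%:R + 3 else 1.
Definition av u k := al u + 1 * dlt u.1 k.
Definition bv u k := - al u + ga u * dlt u.2 k.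
Definition G u w := \sum_k av u k * av w k + \sum_k bv u k * bv w k.

Lemma sum_dlt i : \sum_k dlt i k = (i != ord0)%:R.
Proof.
case: (unliftP ord0 i) => [j ->|->].
  rewrite (bigD1 j) //= /dlt eqxx big1 ?addr0; first by [].
  by move=> k kj; rewrite (inj_eq (@lift_inj _ ord0)) eq_sym (negbTE kj).
by rewrite eqxx big1 // => k _; rewrite /dlt (negbTE (neq_lift _ _)).
Qed.

Lemma sum_dlt2 i i' : \sum_k dlt i k * dlt i' k = ((i == i') && (i != ord0))%:R.
Proof.
have [<-|ii] := eqVneq i i'.
  rewrite -sum_dlt; apply: eq_bigr => k _; rewrite /dlt -natrM mulnb andbb //.
rewrite big1 // => k _; rewrite /dlt -natrM mulnb.
case: (eqVneq i (lift ord0 k)) => [hi|//]; rewrite -hi.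
by rewrite eq_sym (negbTE ii).
Qed.

Lemma Lsum c x c' x' i i' :
  \sum_k (c + x * dlt i k) * (c' + x' * dlt i' k) =
  (n%:R + 1) * c * c' + c * x' * (i' != ord0)%:R + x * c' * (i != ord0)%:R
  + x * x' * ((i == i') && (i != ord0))%:R.
Proof.
have -> : \sum_k (c + x * dlt i k) * (c' + x' * dlt i' k) =
  \sum_(k < n.+1) (c * c') + (c * x') * \sum_k dlt i' k + (x * c') * \sum_k dlt i k
  + (x * x') * \sum_k (dlt i k * dlt i' k).
  rewrite !mulr_sumr -!big_split /=; apply: eq_bigr => k _; ring.
rewrite !sum_dlt sum_dlt2 sumr_const card_ord; congr (_ + _ + _ + _).
by rewrite mulrSr -mulr_natl; ring.
Qed.

Lemma GE u w : G u w =
  2 * ((n%:R + 1) * al u * al w) + al u * (w.1 != ord0)%:R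
  + al w * (u.1 != ord0)%:R + ((u.1 == w.1) && (u.1 != ord0))%:R
  - al u * ga w * (w.2 != ord0)%:R - ga u * al w * (u.2 != ord0)%:R
  + ga u * ga w * ((u.2 == w.2) && (u.2 != ord0))%:R.
Proof. rewrite /G /av /bv !Lsum; ring. Qed.

Lemma neq0_false (x : R) : x = 0 -> (x != 0) = false.
Proof. by move->; rewrite eqxx. Qed.
Lemma neq0_true (x : R) : x <> 0 -> (x != 0) = true.
Proof. by move=> h; apply/eqP. Qed.

Lemma G_pat u w : u != w -> (G u w != 0) = KrKr r u w.
Proof.
have hn : 0 <= n%:R :> R by [].
case: u w => [i j] [i' j']; rewrite xpair_eqE GE /al /ga /KrKr /cart_prod /complete_graph /=.
have h1 : (i == i') ==> ((i == ord0) == (i' == ord0)) by apply/implyP => /eqP->.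
have h2 : (i == ord0) ==> (i' == ord0) ==> (i == i').
  by apply/implyP => /eqP-> ; apply/implyP => /eqP->.
have h3 : (j == j') ==> ((j == ord0) == (j' == ord0)) by apply/implyP => /eqP->.
have h4 : (j == ord0) ==> (j' == ord0) ==> (j == j').
  by apply/implyP => /eqP-> ; apply/implyP => /eqP->.
move: h1 h2 h3 h4.
case: (i == i'); case: (i == ord0); case: (i' == ord0);
case: (j == j'); case: (j == ord0); case: (j' == ord0) => //= _ _ _ _ _;
rewrite ?mulr1n ?mulr0n ?mulr1 ?mul1r ?mulr0 ?mul0r ?addr0 ?add0r ?subr0;
first [ apply: neq0_false; lra | apply: neq0_true => ?; nra ].
Qed.

Definition Xm : 'M[R]_(#|{: V}|, n.+1 + n.+1) :=
  row_mx (\matrix_(i, k) av (enum_val i) k) (\matrix_(i, k) bv (enum_val i) k).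
Definition B0 := Xm *m Xm^T.

Lemma B0E i j : B0 i j = G (enum_val i) (enum_val j).
Proof.
rewrite mxE big_split_ord /=; congr (_ + _); apply: eq_bigr => k _.
  by rewrite !mxE (unsplitK (inl k : 'I_n.+1 + 'I_n.+1)) !mxE.
by rewrite !mxE (unsplitK (inr k : 'I_n.+1 + 'I_n.+1)) !mxE.
Qed.

Lemma B0_psd : psd_pattern_matrix (KrKr r) B0.
Proof.
split.
- by rewrite /B0 trmx_mul trmxK.
- move=> x.
  have -> : x^T *m B0 *m x = (Xm^T *m x)^T *m (Xm^T *m x).
    by rewrite /B0 trmx_mul trmxK !mulmxA.
  rewrite mxE; apply: sumr_ge0 => k _; rewrite mxE -expr2; exact: sqr_ge0.
- move=> i j ij; rewrite B0E G_pat //.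
  by apply: contra ij => /eqP/enum_val_inj ->.
Qed.

Lemma B0_rank : (\rank B0 <= n.+1 + n.+1)%N.
Proof. exact: leq_trans (mxrankM_maxl _ _) (rank_leq_col _). Qed.
End Mat.

Lemma B0_null (R : realType) n : nullity (@B0 R n) = (n.+1 ^ 2 + 1)%N.
Proof.
apply/eqP; rewrite eqn_leq; apply/andP; split.
  rewrite -(card_S0 n). have := nullity_le (@KrKr_sym n) (B0_psd R n) (S0_forcing n). by [].
have := B0_rank R n; rewrite /nullity; move: (\rank (B0 R n)) => rk.
rewrite card_prod card_ord; lia.
Qed.

Close Scope ring_scope.

Theorem lemma3p4 (R : realType) (r : nat) (hr : 2 <= r) :
  Zplus (KrKr r) = (r - 1) ^ 2 + 1 /\ Mplus (KrKr r) R = (r - 1) ^ 2 + 1.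
Proof.
case: r hr => [|[|n]] // _.
have -> : (n.+2 - 1) ^ 2 + 1 = n.+1 ^ 2 + 1 by rewrite subn1.
have hsym := @KrKr_sym n.
have hV : #|{: 'I_n.+2 * 'I_n.+2}| = n.+2 * n.+2 by rewrite card_prod card_ord.
split.
- apply/eqP; rewrite eqn_leq; apply/andP; split.
    rewrite /Zplus -minEnat -leEnat -(card_S0 n).
    by apply: bigmin_le_cond; apply/asboolP; apply: S0_forcing.
  rewrite /Zplus; apply: (big_ind (fun m => n.+1 ^ 2 + 1 <= m)).
  + rewrite hV; lia.
  + by move=> a b ha hb; rewrite leq_min ha hb.
  + move=> S /asboolP hS; rewrite -(B0_null R n).
    by have := nullity_le hsym (B0_psd R n) hS.
- apply/eqP; rewrite eqn_leq; apply/andP; split.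
    apply/bigmax_leqP => k /asboolP [B [hB hk]]; rewrite -hk -(card_S0 n).
    by have := nullity_le hsym hB (S0_forcing n).
  have hk : n.+1 ^ 2 + 1 < #|{: 'I_n.+2 * 'I_n.+2}|.+1 by rewrite hV; lia.
  rewrite /Mplus; apply: (bigop.bigmax_sup (inord (n.+1 ^ 2 + 1))); rewrite ?inordK //.
  by apply/asboolP; exists (@B0 R n); split; [apply: B0_psd | apply: B0_null].
Qed.
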